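(* There exist a point $x\in\{0,1\}^{\mathbb{N}}$ such that, for the full shift $(\{0,1\}^{\mathbb{N}},S)$, $V^{\log}(x)\subsetneq V(x)$.
   Context: $S$ is the left shift. For $N\ge1$ let $\mathrm{Emp}(x,N)=\frac1N\sum_{n=1}^N\delta_{S^{n-1}(x)}$, and for $N\ge2$ let $\mathrm{Emp}^{\log}(x,N)=\frac1{\log N}\sum_{n=1}^N\frac1n\delta_{S^{n-1}(x)}$. $V(x)$ (resp. $V^{\log}(x)$) is the set of Borel probability measures $\nu$ such that $\mathrm{Emp}(x,N_k)\to\nu$ (resp. $\mathrm{Emp}^{\log}(x,N_k)\to\nu$) weak-$*$ for some increasing sequence $(N_k)$. *)

(* Defs.v *)
From HB Require Import structures.
From mathcomp Require Import all_boot all_order all_algebra.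
From mathcomp Require Import all_classical all_reals all_analysis.
Set Implicit Arguments. Unset Strict Implicit. Unset Printing Implicit Defensive.
Import Order.TTheory GRing.Theory Num.Theory.
Import numFieldTopology.Exports.
Local Open Scope classical_set_scope.
Local Open Scope ring_scope.

(* The full shift {0,1}^N with its product topology (cantor_space), equipped
   with its Borel sigma-algebra (generated by the open sets). *)
Definition Omega : Type := g_sigma_algebraType (@open cantor_space).

Definition shift (x : cantor_space) : cantor_space := fun k => x k.+1.
Definition shiftn (n : nat) (x : cantor_space) : cantor_space := iter n shift x.

Definition Prob (R : realType) := probability Omega R.

(* Integral of a test function against Emp(x,N) = 1/N sum_{n=1}^N delta_{S^{n-1} x}. *)
Definition emp_int (R : realType) (x : cantor_space) (N : nat)
  (f : cantor_space -> R) : R :=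
  N%:R^-1 * \sum_(n < N) f (shiftn n x).

(* Integral of a test function against
   Emp^log(x,N) = 1/log N sum_{n=1}^N 1/n delta_{S^{n-1} x}. *)
Definition emp_log_int (R : realType) (x : cantor_space) (N : nat)
  (f : cantor_space -> R) : R :=
  (ln N%:R)^-1 * \sum_(n < N) (n.+1%:R^-1 * f (shiftn n x)).

(* Weak-* convergence of a sequence of measures (given through its integrals
   I k f = int f d mu_k) to nu : for every continuous f, int f dmu_k -> int f dnu. *)
Definition weak_star_cvg (R : realType) (I : nat -> (cantor_space -> R) -> R)
  (nu : Prob R) : Prop :=
  forall f : cantor_space -> R, continuous f ->
    ((fun k => (I k f)%:E) @ \oo --> (\int[nu]_(w in [set: Omega]) (f w)%:E)%E).

Definition V (R : realType) (x : cantor_space) : set (Prob R) :=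
  [set nu | exists N : nat -> nat,
     {homo N : m n / (m < n)%N} /\ (1 <= N 0)%N /\
     weak_star_cvg (fun k => emp_int x (N k)) nu].

Definition Vlog (R : realType) (x : cantor_space) : set (Prob R) :=
  [set nu | exists N : nat -> nat,
     {homo N : m n / (m < n)%N} /\ (2 <= N 0)%N /\
     weak_star_cvg (fun k => emp_log_int x (N k)) nu].

(* Main.v *)
Require Import Defs.
From HB Require Import structures.
From mathcomp Require Import all_boot all_order all_algebra.
From mathcomp Require Import all_classical all_reals all_analysis.
From mathcomp Require Import zify ring lra.
Set Implicit Arguments. Unset Strict Implicit. Unset Printing Implicit Defensive.
Import Order.TTheory GRing.Theory Num.Theory.
Local Open Scope classical_set_scope.

Definition aa (k : nat) : nat := (2 ^ (k ^ 3))%N.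
Definition xb (n : nat) : bool :=
  has (fun j => (aa j <= n) && (n < j * aa j))%N (iota 0 n.+1).

Lemma aa_gt0 k : (0 < aa k)%N.
Proof. by rewrite /aa expn_gt0. Qed.

Lemma aa_mono j k : (j <= k)%N -> (aa j <= aa k)%N.
Proof. by move=> h; rewrite /aa leq_pexp2l // leq_exp2r. Qed.

Lemma aa_gtn k : (k < aa k)%N.
Proof.
apply: (leq_trans (ltn_expl k (isT : 1 < 2)%N)).
rewrite /aa leq_pexp2l //.
case: k => // k; rewrite (expnS _ 2) expnS; nia.
Qed.

Lemma aa_growth k : (k.+1 * (k.+1 * aa k) <= aa k.+1)%N.
Proof.
have e : (k ^ 3 + (k + k) <= k.+1 ^ 3)%N by rewrite !expnS expn0; nia.
apply: leq_trans (leq_pexp2l (isT : 0 < 2)%N e).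
have h := ltn_expl k (isT : 1 < 2)%N.
rewrite !expnD /aa; move: (2 ^ k ^ 3) (2 ^ k) h => X Y hY.
rewrite mulnA mulnC; apply: leq_mul => //; exact: leq_mul.
Qed.

Lemma xbP n : xb n -> exists j, (aa j <= n < j * aa j)%N.
Proof. by case/hasP => j _ h; exists j. Qed.

Lemma xb_block k n : (aa k <= n < k * aa k)%N -> xb n.
Proof.
move=> h; apply/hasP; exists k => //.
rewrite mem_iota add0n ltnS; case/andP: h => h1 _.
by apply: leq_trans (ltnW (aa_gtn k)) h1.
Qed.

Lemma exists_J N : (1 <= N)%N -> exists J, (aa J <= N < aa J.+1)%N.
Proof.
move=> N1.
suff H : forall K, (N < aa K)%N -> exists J, (aa J <= N < aa J.+1)%N.
  exact: (H N (aa_gtn N)).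
elim=> [|K IH] hK; first by move: hK; rewrite /aa; move: N1; lia.
case: (ltnP N (aa K)) => h; first exact: IH.
by exists K; rewrite h hK.
Qed.

Lemma J_ge J0 J N : (aa J0 <= N)%N -> (N < aa J.+1)%N -> (J0 <= J)%N.
Proof.
move=> h1 h2; rewrite leqNgt; apply/negP => h.
have := aa_mono h; move=> h3; have := leq_trans h3 h1.
by rewrite leqNgt h2.
Qed.

Lemma count_lt K A : (\sum_(n < K) (n < A) <= A)%N.
Proof.
suff: (\sum_(n < K) (n < A) = minn K A)%N by move=> ->; exact: geq_minr.
elim: K => [|K IH]; first by rewrite big_ord0 min0n.
rewrite big_ord_recr /= IH; case: (ltnP K A) => h; lia.
Qed.

Lemma count_ge K C : (\sum_(n < K) (C <= n) <= K - C)%N.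
Proof.
elim: K => [|K IH]; first by rewrite big_ord0.
rewrite big_ord_recr /=; case: (leqP C K) => h; move: IH; rewrite ?h /=; lia.
Qed.

Lemma ones_bound k K :
  (\sum_(n < K) xb n <= k.+1 * aa k + (K - aa k.+1))%N.
Proof.
apply: leq_trans (leq_add (count_lt K (k.+1 * aa k)) (count_ge K (aa k.+1))).
rewrite -big_split /=; apply: leq_sum => n _.
case h: (xb n) => //; case/xbP: h => j /andP [h1 h2].
case: (leqP (aa k.+1) n) => h3; first by rewrite addn1.
rewrite addn0 lt0b; apply: (leq_trans h2).
have hj : (j <= k)%N.
  rewrite -ltnS ltnNge; apply/negP => h4.
  by have := leq_trans (aa_mono h4) h1; rewrite leqNgt h3.
apply: leq_mul; first exact: leqW.
exact: aa_mono.
Qed.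

Lemma zeros_bound k K :
  (\sum_(n < K) ~~ xb n <= aa k.+1 + (K - k.+1 * aa k.+1))%N.
Proof.
apply: leq_trans (leq_add (count_lt K (aa k.+1)) (count_ge K (k.+1 * aa k.+1))).
rewrite -big_split /=; apply: leq_sum => n _.
case: (ltnP n (aa k.+1)) => h1; first by case: (~~ xb n).
case: (leqP (k.+1 * aa k.+1) n) => h2; first by case: (~~ xb n).
by rewrite (xb_block (n := n) (k := k.+1)) // h1 h2.
Qed.


Import numFieldTopology.Exports.
Local Open Scope ring_scope.

Lemma shiftnE n (y : cantor_space) i : shiftn n y i = y (i + n)%N.
Proof.
elim: n i => [|n IH] i; first by rewrite addn0.
by rewrite /shiftn iterS -/(shiftn n y) /Defs.shift IH addSnnS.
Qed.

Lemma cyl (R : realType) (f : cantor_space -> R) (p : cantor_space) (e : R) :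
  continuous f -> 0 < e ->
  exists m : nat, forall y : cantor_space,
    (forall i, (i < m)%N -> y i = p i) -> `|f y - f p| < e.
Proof.
move=> cf e0; apply/not_existsP => H.
have H' : forall m, exists y : cantor_space,
    (forall i, (i < m)%N -> y i = p i) /\ ~ (`|f y - f p| < e).
  move=> m; have := H m; case/existsNP => y /not_implyP Hy; by exists y.
have [g Hg] := choice H'.
have gcvg : g @ \oo --> p.
  apply/cvg_sup => N U [V] [[W] oW <-] WfN WU.
  apply: (filterS WU); rewrite nbhs_simpl; exists N.+1 => // m /= hm.
  by rewrite /= (proj1 (Hg m)).
have := cvg_trans (cvg_app f gcvg) (cf p).
move/cvgrPdist_lt => /(_ e e0) [M _ HM].
have := HM M (leqnn M); rewrite /= distrC => h.
by case: (Hg M) => _; apply.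
Qed.

Lemma fbound (R : realType) (f : cantor_space -> R) :
  continuous f -> exists B : R, 0 <= B /\ forall y, `|f y| <= B.
Proof.
move=> cf.
have cK : compact (f @` [set: cantor_space]).
  apply: continuous_compact; last exact: cantor_space_compact.
  exact/continuous_subspaceT.
case: (compact_bounded cK) => M [Mreal HM].
exists (`|M| + 1); split; first by rewrite addr_ge0.
move=> y; apply: (HM (`|M| + 1)); last by exists y.
by apply: (le_lt_trans (real_ler_norm Mreal)); rewrite ltrDl.
Qed.

Lemma cont_meas (R : realType) (f : Omega -> R) :
  continuous (f : cantor_space -> R) -> measurable_fun [set: Omega] f.
Proof.
move=> /continuousP cf.
apply: (measurability _ (measurable_realfun.RGenOpens.measurableE R)).
move=> _ [_ [a [b ->] <-]]; rewrite setTI.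
apply: sub_sigma_algebra; apply: cf; exact: interval_open.
Qed.

Lemma int_dirac (R : realType) (f : cantor_space -> R) (p : Omega) :
  continuous f ->
  (\int[\d_p]_(w in [set: Omega]) (f w)%:E = (f p)%:E)%E.
Proof.
move=> cf; rewrite integral_dirac //; last first.
  by apply/measurable_realfun.measurable_EFinP; apply: cont_meas.
by rewrite diracT mul1e.
Qed.

Definition dprob (R : realType) (p : cantor_space) : Prob R := \d_(p : Omega).


Definition H (R : realType) (N : nat) : R := \sum_(n < N) (n.+1%:R)^-1.

Lemma ln_step1 (R : realType) n :
  ln (n.+2%:R : R) - ln (n.+1%:R) <= (n.+1%:R)^-1.
Proof.
have h1 : 0 < (n.+1%:R : R) by rewrite ltr0n.
have e : (n.+2%:R : R) = n.+1%:R * (1 + (n.+1%:R)^-1).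
  by rewrite mulrDr mulr1 mulfV ?gt_eqF // -natr1.
rewrite e lnM ?posrE //.
rewrite addrAC subrr add0r; apply: le_ln1Dx.
by apply: (lt_le_trans (_ : -1 < 0)) => //; rewrite invr_ge0 ltW.
Qed.

Lemma ln_step2 (R : realType) n :
  (n.+2%:R : R)^-1 <= ln (n.+2%:R) - ln (n.+1%:R).
Proof.
have h2 : 0 < (n.+2%:R : R) by rewrite ltr0n.
have hi : (n.+2%:R : R)^-1 < 1.
  by rewrite invf_lt1 // ltr1n.
have e : (n.+1%:R : R) = n.+2%:R * (1 + - (n.+2%:R)^-1).
  by rewrite mulrDr mulr1 mulrN mulfV ?gt_eqF // -[n.+2]addn1 natrD addrK.
rewrite e lnM ?posrE //; last by rewrite subr_gt0.
rewrite opprD addrA subrr sub0r lerNr.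
apply: le_ln1Dx; rewrite ltrN2 //.
Qed.

Lemma H_lower (R : realType) N : ln (N.+1%:R : R) <= H R N.
Proof.
elim: N => [|N IH]; first by rewrite ln1 /H big_ord0.
rewrite /H big_ord_recr /= -/(H R N).
have h := ln_step1 R N; apply: le_trans (lerD IH h); by rewrite addrC subrK.
Qed.

Lemma H_upper (R : realType) N : H R N.+1 <= 1 + ln (N.+1%:R : R).
Proof.
elim: N => [|N IH]; first by rewrite ln1 /H big_ord_recr big_ord0 /= add0r invr1 addr0.
rewrite /H big_ord_recr /= -/(H R N.+1).
have h := ln_step2 R N; apply: le_trans (lerD IH h) _; by rewrite -addrA lerD2l addrC subrK.
Qed.


Definition X : cantor_space := xb.

Definition bad (R : realType) (p : cantor_space) (m n : nat) : R :=
  \sum_(i < m) (X (i + n)%N != p i)%:R.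

Lemma bad_ge0 (R : realType) p m n : 0 <= bad R p m n.
Proof. by apply: sumr_ge0 => i _; rewrite ler0n. Qed.

Lemma pointwise (R : realType) (f : cantor_space -> R) (p : cantor_space)
  (B e : R) (m n : nat) :
  (forall y, `|f y| <= B) ->
  (forall y : cantor_space, (forall i, (i < m)%N -> y i = p i) -> `|f y - f p| < e) ->
  `|f (shiftn n X) - f p| <= e + 2 * B * bad R p m n.
Proof.
move=> hB he.
have B0 : 0 <= B by apply: le_trans (hB p).
have e0 : 0 <= e by apply: ltW; apply: le_lt_trans (he p _) => //; rewrite subrr normr0.
have [[i0 [hi0 hne]]|hno] := pselect (exists i, (i < m)%N /\ X (i + n)%N != p i).
  have b1 : 1 <= bad R p m n.
    rewrite /bad (bigD1 (Ordinal hi0)) //= hne lerDl.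
    by apply: sumr_ge0 => i _; rewrite ler0n.
  apply: le_trans (ler_normB _ _) _.
  have : `|f (shiftn n X)| + `|f p| <= 2 * B * 1.
    have -> : 2 * B * 1 = B + B by ring.
    by apply: lerD.
  move=> h; apply: le_trans h _; rewrite -[X in X <= _]add0r; apply: lerD => //.
  apply: ler_wpM2l => //; apply: mulr_ge0 => //.
apply: le_trans (ltW (he _ _)) _.
  move=> i hi; rewrite shiftnE.
  case: (eqVneq (X (i + n)%N) (p i)) => // h.
  by exfalso; apply: hno; exists i; split.
rewrite lerDl; apply: mulr_ge0; last exact: bad_ge0.
by apply: mulr_ge0.
Qed.

Lemma est (R : realType) (w : nat -> R) (f : cantor_space -> R) (p : cantor_space)
  (B e : R) (m N : nat) :
  (forall n, 0 <= w n) ->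
  (forall y, `|f y| <= B) ->
  (forall y : cantor_space, (forall i, (i < m)%N -> y i = p i) -> `|f y - f p| < e) ->
  `|\sum_(n < N) w n * f (shiftn n X) - (\sum_(n < N) w n) * f p|
    <= e * \sum_(n < N) w n + 2 * B * \sum_(n < N) w n * bad R p m n.
Proof.
move=> hw hB he.
rewrite mulr_suml -sumrB.
under eq_bigr do rewrite -mulrBr.
apply: le_trans (ler_norm_sum _ _ _) _.
rewrite mulr_sumr mulr_sumr -big_split /=; apply: ler_sum => n _.
rewrite normrM (ger0_norm (hw n)).
have -> : e * w n + 2 * B * (w n * bad R p m n) = w n * (e + 2 * B * bad R p m n).
  by ring.
apply: ler_wpM2l => //; exact: pointwise.
Qed.

Lemma sum_shift (R : realType) (h : nat -> R) i N K :
  (forall n, 0 <= h n) -> (i + N <= K)%N ->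
  \sum_(n < N) h (i + n)%N <= \sum_(n < K) h n.
Proof.
move=> hh hK.
rewrite -(subnKC hK) big_split_ord /= big_split_ord /=.
rewrite [_ + \sum_(_ < N) _]addrC -addrA lerDl; apply: addr_ge0; apply: sumr_ge0 => j _ //.
Qed.

Lemma ces_bad (R : realType) (b : bool) m N :
  \sum_(n < N) bad R (fun _ => b) m n
    <= m%:R * \sum_(n < N + m) (X n != b)%:R.
Proof.
rewrite /bad exchange_big /=.
apply: le_trans (_ : \sum_(i < m) \sum_(n < N + m) (X n != b)%:R <= _).
  apply: ler_sum => i _; apply: (sum_shift (h := fun n => (X n != b)%:R)).
    by move=> n; rewrite ler0n.
  by have := ltn_ord i; lia.
by rewrite sumr_const card_ord mulr_natl.
Qed.

Definition L (R : realType) (K : nat) : R :=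
  \sum_(n < K) (n.+1%:R)^-1 * (X n != false)%:R.

Lemma w_shift (R : realType) i n m : (i < m)%N ->
  (n.+1%:R : R)^-1 <= m%:R * ((i + n).+1%:R)^-1.
Proof.
move=> im.
rewrite -div1r ler_pdivrMr ?ltr0n // mulrAC ler_pdivlMr ?ltr0n // mul1r.
rewrite -natrM ler_nat; nia.
Qed.

Lemma log_bad (R : realType) m N :
  \sum_(n < N) (n.+1%:R)^-1 * bad R (fun _ => false) m n
    <= m%:R * m%:R * L R (N + m).
Proof.
rewrite /bad; under eq_bigr do rewrite mulr_sumr; rewrite exchange_big /=.
apply: le_trans (_ : \sum_(i < m) (m%:R * L R (N + m)) <= _); last first.
  by rewrite sumr_const card_ord -[_ *+ m]mulr_natl mulrA.
apply: ler_sum => i _.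
apply: le_trans (_ : \sum_(n < N) m%:R * (((i + n)%N.+1%:R)^-1 * (X (i + n)%N != false)%:R) <= _).
  apply: ler_sum => n _; rewrite mulrA; apply: ler_wpM2r; first by rewrite ler0n.
  exact: w_shift.
rewrite -mulr_sumr; apply: ler_wpM2l; first by rewrite ler0n.
apply: (sum_shift (h := fun n => (n.+1%:R)^-1 * (X n != false)%:R)).
  by move=> n; apply: mulr_ge0; rewrite ?invr_ge0 ler0n.
by have := ltn_ord i; lia.
Qed.

Lemma L_shift (R : realType) N m : L R (N + m) <= L R N + m%:R.
Proof.
rewrite /L big_split_ord /= lerD2l.
apply: le_trans (_ : \sum_(j < m) (1 : R) <= _); last by rewrite sumr_const card_ord.
apply: ler_sum => j _.
apply: le_trans (_ : ((N + j).+1%:R : R)^-1 * 1 <= _).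
  by apply: ler_wpM2l; [rewrite invr_ge0 ler0n | case: (X _ != false)].
by rewrite mulr1 invf_le1 // ?ler1n // ltr0n.
Qed.


Lemma count_ltR (R : realType) K A : \sum_(n < K) ((n < A)%N%:R : R) <= A%:R.
Proof. by rewrite -natr_sum ler_nat; exact: count_lt. Qed.

Lemma L_bound (R : realType) N J : (N <= aa J.+1)%N ->
  L R N <= (J.+1%:R) ^+ 2.
Proof.
move=> hN.
apply: le_trans (_ : \sum_(n < N) \sum_(j < J.+1)
   ((aa j)%:R^-1 * ((n < j * aa j)%N)%:R) <= _).
  apply: ler_sum => n _.
  case hx: (X n != false); last first.
    rewrite mulr0; apply: sumr_ge0 => j _; apply: mulr_ge0; rewrite ?invr_ge0 ler0n //.
  have : xb n by move: hx; rewrite /X; case: (xb n).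
  case/xbP => j /andP [h1 h2].
  have hj : (j < J.+1)%N.
    rewrite ltnS leqNgt; apply/negP => h3.
    have := leq_trans (aa_mono h3) h1; rewrite leqNgt.
    by have := ltn_ord n; move=> h4; rewrite (leq_trans h4 hN).
  rewrite (bigD1 (Ordinal hj)) //= h2 mulr1.
  apply: le_trans (_ : (aa j)%:R^-1 <= _).
    rewrite lef_pV2 ?posrE ?ltr0n ?aa_gt0 // ler_nat; exact: leqW.
  rewrite /= mulr1 lerDl; apply: sumr_ge0 => k _; apply: mulr_ge0; rewrite ?invr_ge0 ler0n //.
rewrite exchange_big /=.
apply: le_trans (_ : \sum_(j < J.+1) (J%:R : R) <= _); last first.
  rewrite sumr_const card_ord -natrX -[_ *+ J.+1]mulr_natr -natrM ler_nat; nia.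
apply: ler_sum => j _.
rewrite -mulr_sumr.
apply: le_trans (_ : (aa j)%:R^-1 * (j * aa j)%N%:R <= _).
  by apply: ler_wpM2l; rewrite ?invr_ge0 ?ler0n //; exact: count_ltR.
rewrite natrM mulrC -mulrA mulfV ?mulr1 ?ler_nat; last by rewrite pnatr_eq0 -lt0n aa_gt0.
by have := ltn_ord j; lia.
Qed.


Lemma sq_le (J : nat) : (1 <= J)%N -> (J.+1 ^ 2 <= 4 * J ^ 2)%N.
Proof. move=> h; rewrite !expnS expn0; nia. Qed.

Lemma log_conv (R : realType) (f : cantor_space -> R) : continuous f ->
  forall eps : R, 0 < eps -> exists N0 : nat, forall N, (N0 <= N)%N ->
  `|emp_log_int X N f - f (fun _ => false)| <= eps.
Proof.
move=> cf eps eps0.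
set p0 : cantor_space := fun _ => false.
have [B [B0 hB]] := fbound cf.
have e0 : 0 < eps / 4 by rewrite divr_gt0.
have [m hm] := cyl p0 cf e0.
have l20 : 0 < ln (2 : R) by apply: ln_gt0; rewrite ltr1n.
set A := 32 * B * (m%:R)^+2.
set C := 2 * B * (m%:R)^+3 + `|f p0|.
have A0 : 0 <= A by rewrite /A; apply: mulr_ge0; [apply: mulr_ge0|apply: exprn_ge0]; rewrite ?ler0n.
have C0 : 0 <= C.
  by rewrite /C; apply: addr_ge0 => //; apply: mulr_ge0; [apply: mulr_ge0|apply: exprn_ge0]; rewrite ?ler0n.
set K : R := 1 + A / eps + 4 * C / eps.
have KA : A <= eps * K.
  rewrite -ler_pdivrMl // mulrC.
  by rewrite /K -addrA addrC -addrA lerDl; apply: addr_ge0 => //; apply: divr_ge0 => //; [apply: mulr_ge0 | apply: ltW].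
have KC : 4 * C <= eps * K.
  rewrite -ler_pdivrMl // mulrC.
  rewrite /K addrC lerDl; apply: addr_ge0 => //; apply: divr_ge0 => //; exact: ltW.
have K1 : 1 <= K.
  rewrite /K -addrA lerDl; apply: addr_ge0; apply: divr_ge0 => //; rewrite ?mulr_ge0 //; exact: ltW.
pose J0 := (Num.Def.trunc (K / ln 2)).+1.
have hJ0 : K < J0%:R * ln 2 by rewrite -ltr_pdivrMr //; exact: truncnS_gt.
exists (aa J0); move=> N hN.
have N1 : (1 <= N)%N := leq_trans (aa_gt0 J0) hN.
have [J /andP [hJ1 hJ2]] := exists_J N1.
have JJ0 : (J0 <= J)%N := J_ge hN hJ2.
have J1 : (1 <= J)%N := leq_trans (isT : (0 < J0)%N) JJ0.
have Npos : 0 < (N%:R : R) by rewrite ltr0n.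
set lN := ln (N%:R : R).
have hlN : (J%:R)^+3 * ln 2 <= lN.
  have : ln ((aa J)%:R : R) <= lN by rewrite ler_ln ?posrE ?ltr0n ?aa_gt0 // ler_nat.
  by rewrite /aa (natrX R 2 (J ^ 3)) lnXn ?ltr0n // -(mulr_natl (ln 2) (J ^ 3)) (natrX R J 3).
have hJK : K <= J%:R * ln 2.
  apply: le_trans (ltW hJ0) _; rewrite ler_wpM2r ?ler_nat //; exact: ltW.
have hJ3 : J%:R * ln 2 <= lN.
  apply: le_trans _ hlN; apply: ler_wpM2r; first exact: ltW.
  by rewrite -(natrX R J 3) ler_nat; nia.
have lN1 : 1 <= lN by apply: le_trans K1 (le_trans hJK hJ3).
have lN0 : 0 < lN by apply: lt_le_trans lN1.
have Hup : H R N <= 1 + lN.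
  by have := H_upper R N.-1; rewrite prednK.
have Hlow : lN <= H R N.
  apply: le_trans (H_lower R N); by rewrite ler_ln ?posrE ?ltr0n // ler_nat leqnSn.
have hw : forall n, 0 <= (n.+1%:R : R)^-1 by move=> n; rewrite invr_ge0 ler0n.
have hest := est N hw hB hm.
have hbad := log_bad R m N.
have hLs := L_shift R N m.
have hL := L_bound R (ltnW hJ2).
rewrite /emp_log_int -/lN -/(H R N) in hest *.
set S := \sum_(n < N) _ * f (shiftn n X) in hest *.
set Sb := \sum_(n < N) _ * bad R p0 m n in hest hbad *.
set jr : R := J%:R.
set mr : R := m%:R.
have -> : lN^-1 * S - f p0 = lN^-1 * (S - lN * f p0).
  by rewrite mulrBr mulKf // gt_eqF.
rewrite normrM gtr0_norm ?invr_gt0 // ler_pdivrMl //.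
have -> : S - lN * f p0 = (S - H R N * f p0) + (H R N - lN) * f p0 by ring.
apply: le_trans (ler_normD _ _) _.
have h2 : `|(H R N - lN) * f p0| <= `|f p0|.
  rewrite normrM -[X in _ <= X]mul1r ler_wpM2r //.
  rewrite ler_norml; apply/andP; split; last by rewrite lerBlDr.
  by apply: le_trans (_ : 0 <= _); [rewrite lerN10 | rewrite subr_ge0].
apply: le_trans (lerD hest h2) _.
have hSb : Sb <= mr * mr * (J.+1%:R ^+ 2 + mr).
  apply: le_trans hbad _; apply: ler_wpM2l; first by rewrite mulr_ge0 ?ler0n.
  by apply: le_trans hLs _; rewrite lerD2r.
have hA' : A <= eps * (jr * ln 2).
  by apply: le_trans KA _; apply: ler_wpM2l => //; exact: ltW.
have hC' : 4 * C <= eps * (jr * ln 2).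
  by apply: le_trans KC _; apply: ler_wpM2l => //; exact: ltW.
have hJ4 : J.+1%:R ^+ 2 <= 4 * jr ^+ 2.
  by rewrite /jr -!natrX -(natrM R 4) ler_nat; exact: sq_le.
have claimA : 2 * B * (mr * mr * J.+1%:R ^+ 2) <= eps / 4 * lN.
  apply: le_trans (_ : A * (jr ^+ 2 / 4) <= _).
    have -> : A * (jr ^+ 2 / 4) = 2 * B * (mr * mr * (4 * jr ^+ 2)) by rewrite /A; field.
    apply: ler_wpM2l; first by rewrite mulr_ge0.
    by apply: ler_wpM2l => //; rewrite mulr_ge0 ?ler0n.
  apply: le_trans (_ : eps * (jr * ln 2) * (jr ^+ 2 / 4) <= _).
    by apply: ler_wpM2r => //; rewrite mulr_ge0 ?exprn_ge0 ?ler0n.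
  have -> : eps * (jr * ln 2) * (jr ^+ 2 / 4) = eps / 4 * (jr ^+ 3 * ln 2) by ring.
  by apply: ler_wpM2l => //; rewrite divr_ge0 // ltW.
have claimB : C <= eps / 4 * lN.
  apply: le_trans (_ : eps / 4 * (jr * ln 2) <= _); last first.
    by apply: ler_wpM2l => //; rewrite divr_ge0 // ltW.
  have -> : eps / 4 * (jr * ln 2) = (eps * (jr * ln 2)) / 4 by ring.
  by rewrite ler_pdivlMr // mulrC.
have claimE : eps / 4 * H R N <= eps / 4 + eps / 4 * lN.
  by rewrite -[X in X + _]mulr1 -mulrDr ler_wpM2l // divr_ge0 // ltW.
have claim1 : eps / 4 <= eps / 4 * lN.
  by rewrite -[X in X <= _]mulr1 ler_wpM2l // divr_ge0 // ltW.
have hB2 : 2 * B * Sb <= 2 * B * (mr * mr * J.+1%:R ^+ 2) + 2 * B * mr ^+ 3.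
  have -> : 2 * B * (mr * mr * J.+1%:R ^+ 2) + 2 * B * mr ^+ 3
     = 2 * B * (mr * mr * (J.+1%:R ^+ 2 + mr)) by ring.
  by apply: ler_wpM2l => //; rewrite mulr_ge0.
have hCdef : C = 2 * B * mr ^+ 3 + `|f p0| by [].
apply: le_trans (lerD (lerD claimE hB2) (lexx `|f p0|)) _.
have -> : eps / 4 + eps / 4 * lN + (2 * B * (mr * mr * J.+1%:R ^+ 2) + 2 * B * mr ^+ 3) + `|f p0|
   = eps / 4 + eps / 4 * lN + 2 * B * (mr * mr * J.+1%:R ^+ 2) + C by rewrite hCdef; ring.
apply: le_trans (lerD (lerD (lerD claim1 (lexx (eps / 4 * lN))) claimA) claimB) _.
have -> : eps / 4 * lN + eps / 4 * lN + eps / 4 * lN + eps / 4 * lN = lN * eps by field.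
exact: lexx.
Qed.


Lemma ces_gen (R : realType) (f : cantor_space -> R) (b : bool) :
  continuous f -> forall eps : R, 0 < eps ->
  exists m K0 : nat, forall k N : nat, (K0 <= k)%N -> (0 < N)%N ->
  (k.+1 * \sum_(n < N + m) (X n != b) <= N * (1 + m))%N ->
  `|emp_int X N f - f (fun _ => b)| <= eps.
Proof.
move=> cf eps eps0.
set p : cantor_space := fun _ => b.
have [B [B0 hB]] := fbound cf.
have e0 : 0 < eps / 2 by rewrite divr_gt0.
have [m hm] := cyl p cf e0.
set D : R := 4 * B * m%:R * (1 + m%:R).
have D0 : 0 <= D by rewrite /D !mulr_ge0 ?addr_ge0 ?ler0n.
exists m, (Num.Def.trunc (D / eps)); move=> k N hk N0 hZ.
have hkD : D < eps * k.+1%:R.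
  rewrite mulrC -ltr_pdivrMr //; apply: lt_le_trans (truncnS_gt _) _.
  by rewrite ler_nat.
set Zr : R := \sum_(n < N + m) (X n != b)%:R.
have hZr : k.+1%:R * Zr <= N%:R * (1 + m%:R).
  by rewrite /Zr -natr_sum -natrM -(natrD R 1 m) -natrM ler_nat.
have hw : forall n : nat, 0 <= (1 : R) by [].
have hest := est (w := fun _ => 1) N hw hB hm.
have hbad := ces_bad R b m N.
have NR : 0 < (N%:R : R) by rewrite ltr0n.
rewrite /emp_int.
have e1 : \sum_(n < N) f (shiftn n X) = \sum_(n < N) 1 * f (shiftn n X).
  by apply: eq_bigr => n _; rewrite mul1r.
have e2 : \sum_(n < N) (1 : R) = N%:R by rewrite sumr_const card_ord.
have e3 : \sum_(n < N) 1 * bad R p m n = \sum_(n < N) bad R p m n.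
  by apply: eq_bigr => n _; rewrite mul1r.
rewrite -e1 e2 e3 in hest.
rewrite (_ : forall s : R, N%:R^-1 * s - f p = N%:R^-1 * (s - N%:R * f p)); last first.
  by move=> s; rewrite mulrBr mulKf // gt_eqF.
rewrite normrM gtr0_norm ?invr_gt0 // ler_pdivrMl //.
apply: le_trans hest _.
have hk0 : 0 < (k.+1%:R : R) by rewrite ltr0n.
have hb2 : 2 * B * \sum_(n < N) bad R p m n <= 2 * B * (m%:R * Zr).
  by apply: ler_wpM2l; rewrite ?mulr_ge0.
have hmain : 2 * B * (m%:R * Zr) <= eps / 2 * N%:R.
  rewrite -(ler_pM2l hk0).
  apply: le_trans (_ : 2 * B * m%:R * (N%:R * (1 + m%:R)) <= _).
    have -> : k.+1%:R * (2 * B * (m%:R * Zr)) = 2 * B * m%:R * (k.+1%:R * Zr) by ring.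
    by apply: ler_wpM2l; rewrite ?mulr_ge0 ?ler0n.
  have -> : 2 * B * m%:R * (N%:R * (1 + m%:R)) = (D * N%:R) / 2 by rewrite /D; field.
  have -> : k.+1%:R * (eps / 2 * N%:R) = (eps * k.+1%:R * N%:R) / 2 by ring.
  rewrite ler_pM2r ?invr_gt0 // ler_pM2r //; exact: ltW.
apply: le_trans (lerD (lexx _) (le_trans hb2 hmain)) _.
have -> : eps / 2 * N%:R + eps / 2 * N%:R = N%:R * eps by field.
exact: lexx.
Qed.


Lemma cont_first (R : realType) :
  continuous (fun y : cantor_space => ((y 0%N : bool) : nat)%:R : R).
Proof.
apply/continuousP => A oA.
have hp : continuous (fun y : cantor_space => y 0%N).
  exact: (@proj_continuous nat (fun _ => bool) 0%N).
have := proj1 (continuousP _) hp [set b : bool | A ((b : nat)%:R)].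
by apply; exact: discrete_open.
Qed.

Lemma EFin_seq (R : realType) (u : nat -> R) (l : R) :
  u @ \oo --> l -> (fun k => (u k)%:E) @ \oo --> l%:E.
Proof.
move=> h; apply: cvg_EFin; first by near=> k.
exact: h.
Unshelve. all: by end_near.
Qed.

Lemma homo_ge (N : nat -> nat) : {homo N : m n / (m < n)%N} -> forall k, (k <= N k)%N.
Proof.
move=> hN; elim=> [|k IH] //; apply: leq_trans (hN k k.+1 (ltnSn k)).
by rewrite ltnS.
Qed.

Lemma aa_homo : {homo (fun k => aa k.+1) : m n / (m < n)%N}.
Proof.
move=> m n h; rewrite /aa ltn_exp2l // ltn_exp2r //.
Qed.

Lemma aa2_homo : {homo (fun k => k.+1 * aa k.+1)%N : m n / (m < n)%N}.
Proof.
move=> m n h; apply: leq_ltn_trans (_ : m.+1 * aa m.+1 <= m.+1 * aa n.+1)%N _.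
  by rewrite leq_mul2l aa_mono ?orbT // ltnW.
by rewrite ltn_mul2r aa_gt0 ltnS.
Qed.

Lemma ces0 (R : realType) (f : cantor_space -> R) : continuous f ->
  (fun k => emp_int X (aa k.+1) f) @ \oo --> f (fun _ => false).
Proof.
move=> cf; apply/cvgrPdist_le => eps eps0.
have [m [K0 H]] := ces_gen false cf eps0.
exists K0 => // k /= hk; rewrite distrC; apply: (H k) => //; first exact: aa_gt0.
have e : (\sum_(n < aa k.+1 + m) (X n != false) = \sum_(n < aa k.+1 + m) xb n)%N.
  by apply: eq_bigr => n _; rewrite /X; case: (xb n).
rewrite e; have hb := ones_bound k (aa k.+1 + m).
have hg := aa_growth k.
have hk1 := aa_gtn k.+1.
move: hb; rewrite addKn => hb.
apply: leq_trans (leq_mul (leqnn k.+1) hb) _.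
rewrite mulnDr; nia.
Qed.

Lemma ces1 (R : realType) (f : cantor_space -> R) : continuous f ->
  (fun k => emp_int X (k.+1 * aa k.+1) f) @ \oo --> f (fun _ => true).
Proof.
move=> cf; apply/cvgrPdist_le => eps eps0.
have [m [K0 H]] := ces_gen true cf eps0.
exists K0 => // k /= hk; rewrite distrC; apply: (H k) => //.
  by rewrite muln_gt0 aa_gt0.
have e : (\sum_(n < k.+1 * aa k.+1 + m) (X n != true)
   = \sum_(n < k.+1 * aa k.+1 + m) ~~ xb n)%N.
  by apply: eq_bigr => n _; rewrite /X; case: (xb n).
rewrite e; have hb := zeros_bound k (k.+1 * aa k.+1 + m).
have ha := aa_gt0 k.+1.
move: hb; rewrite addKn => hb.
apply: leq_trans (leq_mul (leqnn k.+1) hb) _.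
rewrite mulnDr; nia.
Qed.

Theorem proposition4p3 (R : realType) :
  exists x : cantor_space, @Vlog R x `<` @V R x.
Proof.
exists X.
have logc : forall (f : cantor_space -> R), continuous f ->
    forall N : nat -> nat, {homo N : m n / (m < n)%N} ->
    (fun k => emp_log_int X (N k) f) @ \oo --> f (fun _ => false).
  move=> f cf N hN; apply/cvgrPdist_le => eps eps0.
  have [N0 HN0] := log_conv cf eps0.
  exists N0 => // k /= hk; rewrite distrC; apply: HN0.
  exact: leq_trans hk (homo_ge hN k).
have uniq : forall (u : nat -> R) (a b : \bar R),
    (fun k => (u k)%:E) @ \oo --> a -> (fun k => (u k)%:E) @ \oo --> b -> a = b.
  by move=> u a b ha hb; apply: (cvg_unique _ ha hb).
split.
  move=> nu [N [hN [N2 hw]]].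
  exists (fun k => aa k.+1); split; first exact: aa_homo.
  split; first exact: aa_gt0.
  move=> f cf.
  have h1 := hw f cf.
  have h2 := EFin_seq (logc f cf N hN).
  rewrite (uniq _ _ _ h1 h2).
  exact: EFin_seq (ces0 cf).
move=> hsub.
have hV : V X (dprob R (fun _ => true)).
  exists (fun k => (k.+1 * aa k.+1)%N); split; first exact: aa2_homo.
  split; first by rewrite muln_gt0 aa_gt0.
  move=> f cf; rewrite /dprob int_dirac //; exact: EFin_seq (ces1 cf).
have [N [hN [N2 hw]]] := hsub _ hV.
have cg := @cont_first R.
have h1 := hw _ cg.
rewrite /dprob int_dirac // in h1.
have h2 := EFin_seq (logc _ cg N hN).
have := uniq _ _ _ h1 h2.
by move=> [] /eqP; rewrite oner_eq0.
Qed.
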